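(* Consider the following regulation game. A random triple $(\theta,s,d)$ (agent type, training state, deployment state) has joint distribution $\pi$. Prediction functions are vectors $f\in\mathbb{R}^n$. Given $s$ (and $\theta$), expected agent utility and expected principal welfare are $\overline{U}_\theta(f;s) = -(f-\bar u)'\overline{\Omega}_U(f-\bar u)$ and $\overline{W}(f;s) = -(f-\bar w)'\overline{\Omega}_W(f-\bar w)$ with $\bar u=\bar u(s,\theta)$, $\bar w=\bar w(s)\in\mathbb{R}^n$. The principal first (knowing only $\pi$) chooses a linear explainer, i.e. a $k\times n$ real matrix $\mathcal{E}$ ($k<n$), and possibly an ex-ante restriction $\mathcal{F}=\{f\in\mathbb{R}^n: Af=a\}$ with $A\in\mathbb{R}^{m\times n}$, $a\in\mathbb{R}^m$ not depending on $s$ or $\theta$; she then, after observing $s$, dictates the value of the explanation $\mathcal{E}f=e(s)$ (a failed audit has infinite cost to the agent). The agent, knowing $\theta$ and $s$, chooses $f$ maximizing $\overline{U}_\theta(f;s)$ subject to $Af=a$ and $\mathcal{E}f=e(s)$. The principal chooses her instruments to maximize $\mathop{E}_\pi[\overline{W}(f;s)]$. A restriction is called fully explainable if, together with the explainer, it determines $f$ completely (i.e. $f$ is restricted to a $k$-dimensional space on which $\mathcal{E}$ is fully informative, e.g. $A$ of rank $n-k$). Assume $\overline{\Omega}_U=\overline{\Omega}_W$ and both are constant (non-random) and positive definite almost surely. If $\operatorname{Var}_\pi(\bar w) \succ \mathop{E}_\pi[(\bar u-\bar w)(\bar u-\bar w)']$ (in the positive definite order), then restricting the agent to fully explainable functions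 is never optimal for any $k<n$; indeed it is dominated (in expected welfare) by not restricting the agent ex-ante at all.
   Context: $\succ$ denotes the order on symmetric matrices given by positive definiteness of the difference. *)

(* Defs.v *)
From HB Require Import structures.
From mathcomp Require Import all_boot all_order all_algebra.
From mathcomp Require Import all_classical all_reals all_analysis.
Set Implicit Arguments. Unset Strict Implicit. Unset Printing Implicit Defensive.
Import Order.TTheory GRing.Theory Num.Theory.
Import numFieldNormedType.Exports.
Local Open Scope classical_set_scope.
Local Open Scope ring_scope.

Section Defs.
Context {R : realType}.

Definition qform {n} (M : 'M[R]_n) (x : 'cV[R]_n) : R := (x^T *m M *m x) 0 0.

Definition posdef {n} (M : 'M[R]_n) : Prop :=
  M^T = M /\ forall x : 'cV[R]_n, x != 0 -> 0 < qform M x.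

Definition mx_succ {n} (A B : 'M[R]_n) : Prop := posdef (A - B).

Definition quadpay {n} (Om : 'M[R]_n) (f c : 'cV[R]_n) : R := - qform Om (f - c).

(* Restriction {f | A f = a} is fully explainable for the explainer E:
   it is a (nonempty) k-dimensional affine space (rank A = n - k) on which
   E is fully informative (injective on its direction ker A). *)
Definition fully_explainable {n k m} (E : 'M[R]_(k, n)) (A : 'M[R]_(m, n))
    (a : 'cV[R]_m) : Prop :=
  (exists f : 'cV[R]_n, A *m f = a) /\ \rank A = (n - k)%N /\
  (forall x : 'cV[R]_n, A *m x = 0 -> E *m x = 0 -> x = 0).

Definition agent_best {n k m} (Om : 'M[R]_n) (A : 'M[R]_(m, n)) (a : 'cV[R]_m)
    (E : 'M[R]_(k, n)) (e : 'cV[R]_k) (ubar f : 'cV[R]_n) : Prop :=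
  A *m f = a /\ E *m f = e /\
  forall g, A *m g = a -> E *m g = e -> quadpay Om g ubar <= quadpay Om f ubar.

Definition agent_best_free {n k} (Om : 'M[R]_n)
    (E : 'M[R]_(k, n)) (e : 'cV[R]_k) (ubar f : 'cV[R]_n) : Prop :=
  E *m f = e /\ forall g, E *m g = e -> quadpay Om g ubar <= quadpay Om f ubar.

Context {d : measure_display} {T : measurableType d}.

Definition mvec {n} (X : T -> 'cV[R]_n) : Prop :=
  forall i, measurable_fun setT (fun x => X x i 0).

Definition sq_integrable (P : probability T R) {n} (X : T -> 'cV[R]_n) : Prop :=
  forall i, measurable_fun setT (fun x => X x i 0) /\
            P.-integrable setT (fun x => ((X x i 0) ^+ 2)%:E).

Definition Emx (P : probability T R) {p q} (X : T -> 'M[R]_(p, q)) : 'M[R]_(p, q) :=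
  \matrix_(i, j) (\int[P]_x (X x i j)).

Definition Varmx (P : probability T R) {n} (X : T -> 'cV[R]_n) : 'M[R]_n :=
  Emx P (fun x => (X x - Emx P X) *m (X x - Emx P X)^T).

Definition welfare (P : probability T R) {n} (Om : 'M[R]_n)
    (f w : T -> 'cV[R]_n) : \bar R :=
  (\int[P]_x (quadpay Om (f x) (w x))%:E)%E.

End Defs.

(* Main.v *)
Require Import Defs.
From HB Require Import structures.
From mathcomp Require Import all_boot all_order all_algebra.
From mathcomp Require Import all_classical all_reals all_analysis.
From mathcomp Require Import ring lra measurable_realfun.
Unset Printing Implicit Defensive.
Import Order.TTheory GRing.Theory Num.Theory.
Local Open Scope classical_set_scope.
Local Open Scope ring_scope.

Section LA.
Variable R : realType.

Definition bil {n} (M : 'M[R]_n) (x y : 'cV[R]_n) : R := (x^T *m M *m y) 0 0.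

Lemma qformE' n (M : 'M[R]_n) x : qform M x = bil M x x.
Proof. by []. Qed.



Lemma bilDl n (M : 'M[R]_n) x y z : bil M (x + y) z = bil M x z + bil M y z.
Proof. by rewrite /bil linearD /= !mulmxDl mxE. Qed.
Lemma bilDr n (M : 'M[R]_n) x y z : bil M z (x + y) = bil M z x + bil M z y.
Proof. by rewrite /bil !mulmxDr mxE. Qed.
Lemma bilZl n (M : 'M[R]_n) a x z : bil M (a *: x) z = a * bil M x z.
Proof. by rewrite /bil linearZ /= -!scalemxAl mxE. Qed.
Lemma bilZr n (M : 'M[R]_n) a x z : bil M z (a *: x) = a * bil M z x.
Proof. by rewrite /bil -!scalemxAr mxE. Qed.
Lemma bilNl n (M : 'M[R]_n) x z : bil M (- x) z = - bil M x z.
Proof. by rewrite -scaleN1r bilZl mulN1r. Qed.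
Lemma bilNr n (M : 'M[R]_n) x z : bil M z (- x) = - bil M z x.
Proof. by rewrite -scaleN1r bilZr mulN1r. Qed.
Lemma bilBl n (M : 'M[R]_n) x y z : bil M (x - y) z = bil M x z - bil M y z.
Proof. by rewrite bilDl bilNl. Qed.
Lemma bilBr n (M : 'M[R]_n) x y z : bil M z (x - y) = bil M z x - bil M z y.
Proof. by rewrite bilDr bilNr. Qed.
Lemma bil_tr n (M : 'M[R]_n) x y : bil M x y = bil M^T y x.
Proof.
rewrite /bil -[in LHS](trmxK (x^T *m M *m y)) mxE !trmx_mul trmxK mulmxA //.
Qed.
Lemma bil_sym n (M : 'M[R]_n) x y : M^T = M -> bil M x y = bil M y x.
Proof. by move=> hM; rewrite bil_tr hM. Qed.


Lemma qform_sum n (M : 'M[R]_n) x :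
  qform M x = \sum_i \sum_j x i 0 * M i j * x j 0.
Proof.
rewrite /qform mxE exchange_big; apply: eq_bigr => j _.
rewrite mxE big_distrl; apply: eq_bigr => i _ /=; by rewrite mxE.
Qed.

Lemma bil_sum n (M : 'M[R]_n) x y :
  bil M x y = \sum_i \sum_j x i 0 * M i j * y j 0.
Proof.
rewrite /bil mxE exchange_big; apply: eq_bigr => j _.
rewrite mxE big_distrl; apply: eq_bigr => i _ /=; by rewrite mxE.
Qed.

Definition ev {n} (i : 'I_n) : 'cV[R]_n := delta_mx i 0.

Lemma bil_ev n (M : 'M[R]_n) i j : bil M (ev i) (ev j) = M i j.
Proof.
rewrite /bil /ev trmx_delta -rowE -colE !mxE //.
Qed.

Lemma bil_evr n (M : 'M[R]_n) x i : bil M x (ev i) = \sum_a x a 0 * M a i.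
Proof.
rewrite /bil /ev -colE !mxE; apply: eq_bigr => a _; rewrite !mxE //.
Qed.

Lemma qformD n (M : 'M[R]_n) x y : M^T = M ->
  qform M (x + y) = qform M x + 2 * bil M x y + qform M y.
Proof.
move=> hM; rewrite !qformE' bilDl !bilDr (bil_sym _ _ y x hM); ring.
Qed.

Lemma qformDZ n (M : 'M[R]_n) x y t : M^T = M ->
  qform M (x + t *: y) = qform M x + 2 * t * bil M x y + t ^+ 2 * qform M y.
Proof.
move=> hM; rewrite qformD // !qformE' bilZr bilZl bilZr; ring.
Qed.

Definition psd {n} (M : 'M[R]_n) := forall x, 0 <= qform M x.

Lemma psd_diag0 n (C : 'M[R]_n) i : C^T = C -> psd C -> C i i = 0 ->
  forall j, C i j = 0.
Proof.
move=> hC pC Cii j; apply/eqP; apply/negPn/negP => hb.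
set b := C i j. set a := C j j.
have a0 : 0 <= a by have := pC (ev j); rewrite qformE' bil_ev.
have := pC (ev j + (- (a + 1) / (2 * b)) *: ev i).
rewrite qformDZ // !qformE' !bil_ev Cii -/a.
have -> : C j i = b by rewrite -{1}hC mxE.
have -> : 2 * (- (a + 1) / (2 * b)) * b = - (a + 1) by field.
rewrite mulr0 addr0; lra.
Qed.


Definition tr2 {n} (C D : 'M[R]_n) := \sum_i \sum_j C i j * D i j.
Definition peel {n} (C : 'M[R]_n) i := \matrix_(a, b) (C a b - C a i * C b i / C i i).

Lemma peel_sym n (C : 'M[R]_n) i : C^T = C -> (peel C i)^T = peel C i.
Proof.
move=> hC; apply/matrixP => a b; rewrite !mxE.
have -> : C b a = C a b by rewrite -{1}hC mxE.
by rewrite [C b i * _]mulrC.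
Qed.

Lemma peel_qform n (C : 'M[R]_n) i x :
  qform (peel C i) x = qform C x - (bil C x (ev i)) ^+ 2 / C i i.
Proof.
rewrite !qform_sum bil_evr expr2 big_distrl /= big_distrl /= -sumrB.
apply: eq_bigr => a _; rewrite big_distrr /= big_distrl /= -sumrB.
apply: eq_bigr => b _; rewrite !mxE.
have [->|h] := eqVneq (C i i) 0; first by rewrite !invr0; ring.
by field.
Qed.


Lemma diag_ge0 n (C : 'M[R]_n) i : psd C -> 0 <= C i i.
Proof. by move=> pC; have := pC (ev i); rewrite qformE' bil_ev. Qed.

Lemma peel_psd n (C : 'M[R]_n) i : C^T = C -> psd C -> psd (peel C i).
Proof.
move=> hC pC x; rewrite peel_qform.
have [->|h] := eqVneq (C i i) 0; first by rewrite invr0 mulr0 subr0.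
set s := bil C x (ev i).
have := pC (x + (- s / C i i) *: ev i).
rewrite qformDZ // !qformE' bil_ev -/s.
have -> : bil C x x + 2 * (- s / C i i) * s + (- s / C i i) ^+ 2 * C i i
   = bil C x x - s ^+ 2 / C i i by field.
done.
Qed.

Lemma peel_tr2 n (C D : 'M[R]_n) i :
  tr2 C D = tr2 (peel C i) D + qform D (col i C) / C i i.
Proof.
rewrite /tr2 qform_sum big_distrl /= -big_split /=; apply: eq_bigr => a _.
rewrite big_distrl /= -big_split /=; apply: eq_bigr => b _; rewrite !mxE.
have [->|h] := eqVneq (C i i) 0; first by rewrite !invr0; ring.
by field.
Qed.

Lemma peel_diag n (C : 'M[R]_n) i j : C^T = C -> psd C ->
  (j == i) || (C j j == 0) -> peel C i j j = 0.
Proof.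
move=> hC pC /orP[/eqP->|/eqP h]; rewrite mxE.
  have [->|h] := eqVneq (C i i) 0; first by rewrite !invr0; ring.
  by field.
have -> : C j i = 0 by apply: psd_diag0.
by rewrite h; ring.
Qed.

Definition nzd {n} (C : 'M[R]_n) : {set 'I_n} := [set i | C i i != 0]%SET.

Lemma tr2_ge0_aux (N : nat) n (C D : 'M[R]_n) : posdef D ->
  (#|nzd C| <= N)%N -> C^T = C -> psd C -> 0 <= tr2 C D.
Proof.
move=> [hD pD]; elim: N C => [|N IH] C.
  rewrite leqn0 => /eqP h0c hC pC; have h0 := cards0_eq h0c.
  rewrite /tr2 big1 // => a _; rewrite big1 // => b _.
  have : a \notin nzd C by rewrite h0 inE.
  by rewrite inE negbK => /eqP/(psd_diag0 _ _ _ hC pC) ->; rewrite mul0r.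
move=> hN hC pC.
have [h0|[i hi]] := set_0Vmem (nzd C).
  rewrite /tr2 big1 // => a _; rewrite big1 // => b _.
  have : a \notin nzd C by rewrite h0 inE.
  by rewrite inE negbK => /eqP/(psd_diag0 _ _ _ hC pC) ->; rewrite mul0r.
have hpr : (nzd (peel C i) \proper nzd C)%SET.
  apply/properP; split.
    apply/fintype.subsetP => j; rewrite !inE; apply: contraNN => /eqP hj.
    by apply/eqP/peel_diag => //; rewrite hj eqxx orbT.
  exists i => //; rewrite inE negbK; apply/eqP/peel_diag => //; by rewrite eqxx.
have hc := proper_card hpr.
rewrite (peel_tr2 _ _ _ i); apply: addr_ge0.
  apply: IH; [|exact: peel_sym|exact: peel_psd].
  by rewrite -ltnS (leq_trans hc).
apply: divr_ge0; last exact: diag_ge0.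
have [->|hz] := eqVneq (col i C) 0; first by rewrite /qform mulmx0 mxE.
exact/ltW/pD.
Qed.


Lemma tr2_gt0 n (C D : 'M[R]_n) : posdef D -> C^T = C -> psd C ->
  (exists z, 0 < qform C z) -> 0 < tr2 C D.
Proof.
move=> hD hC pC [z hz].
have [h0|[i hi]] := set_0Vmem (nzd C).
  suff : C = 0 by move=> C0; move: hz; rewrite C0 /qform mulmx0 mul0mx mxE ltxx.
  apply/matrixP => a b; rewrite mxE.
  have : a \notin nzd C by rewrite h0 inE.
  by rewrite inE negbK => /eqP/(psd_diag0 _ _ _ hC pC) ->.
move: hi; rewrite inE => hi.
rewrite (peel_tr2 _ _ _ i); apply: ltr_wpDl.
  apply: (tr2_ge0_aux #|nzd (peel C i)|) => //; [exact: peel_sym|exact: peel_psd].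
case: hD => _ pD.
apply: divr_gt0; last by rewrite lt_def hi diag_ge0.
apply: pD; apply/eqP => /matrixP/(_ i 0); rewrite !mxE => /eqP; exact/negP.
Qed.


Lemma ker_basis n k m (A : 'M[R]_(m, n)) : (k <= n)%N -> \rank A = (n - k)%N ->
  exists B : 'M[R]_(n, k), A *m B = 0 /\ (forall y : 'cV[R]_k, B *m y = 0 -> y = 0) /\
    (forall x : 'cV[R]_n, A *m x = 0 -> exists y : 'cV[R]_k, x = B *m y).
Proof.
move=> kn hr; set K := kermx A^T.
have hk : \rank K = k by rewrite mxrank_ker mxrank_tr hr subKn.
have := eq_row_base K; have := row_base_free K; move: (row_base K).
rewrite hk => Bt hfree heq.
exists Bt^T; split; [|split].
- apply: trmx_inj; rewrite trmx_mul trmxK trmx0; apply/eqP.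
  by rewrite -sub_kermx -/K -heq submx_refl.
- move=> y hy; apply: trmx_inj; rewrite trmx0; apply/eqP.
  by rewrite -(mulmx_free_eq0 y^T hfree) -[y^T *m Bt]trmxK trmx_mul !trmxK hy trmx0.
- move=> x hx; have : (x^T <= Bt)%MS.
    by rewrite heq sub_kermx -trmx_mul hx trmx0.
  case/submxP => D hD; exists D^T; apply: trmx_inj.
  by rewrite trmx_mul !trmxK.
Qed.


Lemma psd_of_posdef n (M : 'M[R]_n) : posdef M -> psd M.
Proof.
move=> [_ pM] x; have [->|hx] := eqVneq x 0; last exact/ltW/pM.
by rewrite /qform mulmx0 mxE.
Qed.

Lemma ker_nonzero k n (E : 'M[R]_(k, n)) : (k < n)%N ->
  exists z : 'cV[R]_n, z != 0 /\ E *m z = 0.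
Proof.
move=> kn; set K := kermx E^T.
have hK : K != 0.
  rewrite -mxrank_eq0 mxrank_ker mxrank_tr -lt0n subn_gt0.
  exact: leq_ltn_trans (rank_leq_row E) kn.
have [i hi] : exists i, row i K != 0.
  apply/existsP; apply: contraNT hK => /existsPn h.
  by apply/eqP/row_matrixP => i; rewrite row0; apply/eqP/negbNE/h.
exists (row i K)^T; split.
  by apply: contraNN hi => /eqP h; rewrite -[row i K]trmxK h trmx0.
apply: trmx_inj; rewrite trmx_mul trmxK trmx0 -row_mul.
by rewrite /K mulmx_ker row0.
Qed.

Lemma foc n k (Om : 'M[R]_n) (E : 'M[R]_(k, n)) e u f : Om^T = Om -> psd Om ->
  agent_best_free Om E e u f ->
  forall z, E *m z = 0 -> bil Om z (f - u) = 0.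
Proof.
move=> hOm pOm [hf hb] z hz.
set b := bil Om z (f - u); set c := qform Om z.
have c0 : 0 <= c by apply: pOm.
have := hb (f + (- b / (c + 1)) *: z).
rewrite mulmxDr -scalemxAr hz scaler0 addr0 hf => /(_ erefl).
rewrite /quadpay lerN2 addrAC qformDZ // (bil_sym _ _ _ _ hOm) -/b -/c.
move=> h.
have he : 2 * (- b / (c + 1)) * b + (- b / (c + 1)) ^+ 2 * c =
          - (b ^+ 2 * ((c + 2) / (c + 1) ^+ 2)).
  by field; rewrite gt_eqF // ltr_wpDl.
have h2 : b ^+ 2 * ((c + 2) / (c + 1) ^+ 2) <= 0 by lra.
have h1 : 0 < (c + 2) / (c + 1) ^+ 2.
  by rewrite divr_gt0 // ?exprn_gt0 // ltr_wpDl.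
have : b ^+ 2 <= 0 by rewrite -(pmulr_lle0 _ h1).
by move=> hb2; apply/eqP; rewrite -sqrf_eq0 eq_le hb2 sqr_ge0.
Qed.


Section Proj.
Variables (n k m : nat) (Om : 'M[R]_n) (B : 'M[R]_(n, k)).
Hypothesis hOm : posdef Om.
Hypothesis hB : forall y : 'cV[R]_k, B *m y = 0 -> y = 0.

Let hOs : Om^T = Om. Proof. by case: hOm. Qed.

Definition Gm := B^T *m Om *m B.
Definition Ep := B^T *m Om.
Definition Pm := 1%:M - B *m invmx Gm *m Ep.

Lemma Gm_unit : Gm \in unitmx.
Proof.
rewrite -unitmx_tr -row_free_unit -kermx_eq0; apply/eqP.
apply/row_matrixP => i; rewrite row0; set r := row i _.
have hr : r *m Gm^T = 0.
  by rewrite /r -row_mul mulmx_ker row0.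
have hBr : B *m r^T = 0.
  case: hOm => _ pOm; apply/eqP; apply: contraT => hne.
  have := pOm _ hne; rewrite /qform.
  have -> : (B *m r^T)^T *m Om *m (B *m r^T) = (r *m Gm^T)^T^T *m r^T.
    by rewrite trmxK /Gm !trmx_mul !trmxK hOs !mulmxA.
  by rewrite hr trmx0 trmx0 mul0mx mxE ltxx.
by apply: trmx_inj; rewrite trmx0; apply: hB.
Qed.

Lemma EpB : Ep *m B = Gm. Proof. by []. Qed.

Lemma EpP : Ep *m Pm = 0.
Proof.
rewrite /Pm mulmxBr mulmx1 !mulmxA EpB mulmxV ?Gm_unit // mul1mx subrr //.
Qed.

Lemma PB : Pm *m B = 0.
Proof.
rewrite /Pm mulmxBl mul1mx -[B *m invmx Gm *m Ep *m B]mulmxA EpB -mulmxA mulVmx ?Gm_unit // mulmx1 subrr //.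
Qed.

Lemma orthB (z : 'cV[R]_n) (y : 'cV[R]_k) : Ep *m z = 0 -> bil Om z (B *m y) = 0.
Proof.
move=> hz; rewrite /bil mulmxA -(mulmxA z^T) .
have -> : z^T *m (Om *m B) = (Ep *m z)^T.
  by rewrite /Ep !trmx_mul trmxK hOs mulmxA.
by rewrite hz trmx0 mul0mx mxE.
Qed.

Lemma subP (x : 'cV[R]_n) : x - Pm *m x = B *m (invmx Gm *m Ep *m x).
Proof. by rewrite /Pm mulmxBl mul1mx opprB addrC subrK !mulmxA. Qed.

Lemma qform_split (x : 'cV[R]_n) : qform Om x = qform Om (Pm *m x) + qform Om (x - Pm *m x).
Proof.
have e : x = Pm *m x + (x - Pm *m x) by rewrite addrC subrK.
rewrite {1}e (qformD _ _ (Pm *m x) (x - Pm *m x) hOs) subP orthB ?mulmxA ?EpP ?mul0mx //.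
by rewrite mulr0 addr0.
Qed.

Lemma qformP_le (x : 'cV[R]_n) : qform Om (Pm *m x) <= qform Om x.
Proof.
by rewrite [leRHS]qform_split lerDl; apply: psd_of_posdef.
Qed.

Lemma PmK (z : 'cV[R]_n) : Ep *m z = 0 -> Pm *m z = z.
Proof. by move=> hz; rewrite /Pm mulmxBl mul1mx -[B *m _ *m Ep *m z]mulmxA hz mulmx0 subr0. Qed.

Lemma best_char (h r : 'cV[R]_n) : Ep *m h = 0 ->
  (forall z, Ep *m z = 0 -> bil Om z (h - r) = 0) -> h = Pm *m r.
Proof.
move=> hh hz; set d := h - Pm *m r.
have hd : Ep *m d = 0 by rewrite /d mulmxBr hh mulmxA EpP mul0mx subrr.
have : qform Om d = 0.
  have e1 : d = (h - r) - (Pm *m r - r) by rewrite /d opprB addrA subrK.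
  rewrite qformE' {2}e1 bilBr hz // -(opprB r (Pm *m r)) subP bilNr orthB // oppr0 subr0 //.
case: hOm => _ pOm; apply: contra_eq => hne.
by rewrite gt_eqF // pOm // subr_eq0.
Qed.

Lemma best_exists (u w : 'cV[R]_n) :
  agent_best_free Om Ep (Ep *m w) u (w + Pm *m (u - w)).
Proof.
split; first by rewrite mulmxDr mulmxA EpP mul0mx addr0.
move=> g hg; rewrite /quadpay lerN2.
set f' := w + Pm *m (u - w).
have ha : f' - u = - (B *m (invmx Gm *m Ep *m (u - w))).
  by rewrite -subP /f' opprB (opprB u w) addrA [Pm *m _ + w]addrC.
have hd : Ep *m (g - f') = 0.
  by rewrite mulmxBr hg /f' mulmxDr mulmxA EpP mul0mx addr0 subrr.
have -> : g - u = (g - f') + (f' - u) by rewrite addrA subrK.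
rewrite (qformD _ _ (g - f') (f' - u) hOs) [in bil _ _ _]ha bilNr orthB // oppr0 mulr0 addr0 lerDr.
exact: psd_of_posdef.
Qed.

Lemma best_unique (u w f' : 'cV[R]_n) :
  agent_best_free Om Ep (Ep *m w) u f' -> f' = w + Pm *m (u - w).
Proof.
move=> hb; have hf := foc _ _ _ _ _ _ _ hOs (psd_of_posdef _ _ hOm) hb.
have -> : Pm *m (u - w) = f' - w; last by rewrite addrC subrK.
apply/esym/best_char; first by case: hb => h _; rewrite mulmxBr h subrr.
move=> z hz; rewrite opprB addrA subrK; exact: hf.
Qed.

Lemma Pm_aff (A : 'M[R]_(m, n)) (a : 'cV[R]_m) (v0 f : 'cV[R]_n) :
  (forall x : 'cV[R]_n, A *m x = 0 -> exists y : 'cV[R]_k, x = B *m y) ->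
  A *m v0 = a -> A *m f = a -> Pm *m f = Pm *m v0.
Proof.
move=> hker hv hf; have [y hy] : exists y, f - v0 = B *m y.
  by apply: hker; rewrite mulmxBr hv hf subrr.
apply/eqP; rewrite -subr_eq0 -mulmxBr hy mulmxA PB mul0mx //.
Qed.

Definition Qm := Pm^T *m Om *m Pm.

Lemma qformPQ (x : 'cV[R]_n) : qform Om (Pm *m x) = qform Qm x.
Proof. by rewrite /qform /Qm trmx_mul !mulmxA. Qed.

Lemma Qm_sym : Qm^T = Qm.
Proof. by rewrite /Qm !trmx_mul trmxK hOs mulmxA. Qed.

Lemma Qm_psd : psd Qm.
Proof. by move=> x; rewrite -qformPQ; apply: psd_of_posdef. Qed.

Lemma Qm_pos : (k < n)%N -> exists z, 0 < qform Qm z.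
Proof.
move=> kn; have [z [hz0 hz]] := ker_nonzero _ _ Ep kn.
exists z; rewrite -qformPQ PmK //; case: hOm => _; exact.
Qed.

End Proj.

End LA.
Section Prob.
Context {R : realType} {d : measure_display} {T : measurableType d}.
Variable P : probability T R.

Lemma ge0_le_integral_nm (F G : T -> \bar R) :
  (forall x, (0 <= F x)%E) -> (forall x, (F x <= G x)%E) ->
  (\int[P]_x F x <= \int[P]_x G x)%E.
Proof.
move=> F0 FG; rewrite !ge0_integralTE //; last by move=> x; apply: le_trans (FG x).
apply: ereal_sup_le => _ [h hF <-]; exists h => //= x.
exact: le_trans (hF x) (FG x).
Qed.

Definition sqi (f : T -> R) := measurable_fun setT f /\
  P.-integrable setT (fun x => ((f x) ^+ 2)%:E).

Lemma Rint_sum (I : finType) (F : I -> T -> R) :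
  (forall i, P.-integrable setT (EFin \o F i)) ->
  \int[P]_x (\sum_i F i x) = \sum_i \int[P]_x F i x.
Proof.
move=> hF; rewrite /Rintegral.
under eq_integral do rewrite -sumEFin.
rewrite integral_sum //.
have -> : (\sum_i \int[P]_x (F i x)%:E = (\sum_i fine (\int[P]_x (F i x)%:E))%:E)%E.
  rewrite -sumEFin; apply: eq_bigr => i _; rewrite fineK //.
  exact: (integrable_fin_num measurableT (hF i)).
by [].
Qed.


Definition intR (f : T -> R) := P.-integrable setT (EFin \o f).

Lemma intR_add (f g : T -> R) : intR f -> intR g -> intR (fun x => f x + g x).
Proof.
move=> hf hg; apply: (eq_integrable measurableT _ _ _ (integrableD measurableT hf hg)) => x _.
by rewrite /= EFinD.
Qed.

Lemma intR_scale (a : R) (f : T -> R) : intR f -> intR (fun x => a * f x).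
Proof.
move=> hf; apply: (eq_integrable measurableT _ _ _ (integrableZl measurableT a hf)) => x _.
by rewrite /= EFinM.
Qed.

Lemma intR_opp (f : T -> R) : intR f -> intR (fun x => - f x).
Proof.
move=> hf; have := intR_scale (-1) _ hf; rewrite /intR => h.
by apply: (eq_integrable measurableT _ _ _ h) => x _ /=; rewrite mulN1r.
Qed.

Lemma intR_sub (f g : T -> R) : intR f -> intR g -> intR (fun x => f x - g x).
Proof. by move=> hf hg; apply: intR_add => //; apply: intR_opp. Qed.

Lemma intR_cst (c : R) : intR (fun _ => c).
Proof. exact: (finite_measure_integrable_cst P c measurableT). Qed.

Lemma intR_dom (f g : T -> R) : measurable_fun setT f -> (forall x, `|f x| <= g x) -> intR g -> intR f.
Proof.
move=> mf hfg hg; apply: (le_integrable measurableT _ _ hg).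
  exact/measurable_EFinP.
move=> x _ /=; rewrite lee_fin (le_trans (hfg x)) //.
exact: ler_norm.
Qed.

Lemma sqi_int (f : T -> R) : sqi f -> intR f.
Proof.
case=> mf hf2; apply: (intR_dom _ (fun x => f x ^+ 2 + 1)) => //.
  move=> x; have [h|h] := lerP 0 (f x).
    by rewrite ger0_norm //; nra.
  by rewrite ltr0_norm //; nra.
by apply: intR_add => //; apply: intR_cst.
Qed.

Lemma normM_le (a b : R) : `|a * b| <= a ^+ 2 + b ^+ 2.
Proof.
rewrite normrM -(real_normK (num_real a)) -(real_normK (num_real b)).
have := sqr_ge0 (`|a| - `|b|); have := normr_ge0 a; have := normr_ge0 b; nra.
Qed.

Lemma sqi_mul (f g : T -> R) : sqi f -> sqi g -> intR (fun x => f x * g x).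
Proof.
case=> mf hf2 [mg hg2]; apply: (intR_dom _ (fun x => f x ^+ 2 + g x ^+ 2)) => //.
  exact: measurable_funM.
  move=> x; exact: normM_le.
by apply: intR_add.
Qed.

Lemma sqi_add (f g : T -> R) : sqi f -> sqi g -> sqi (fun x => f x + g x).
Proof.
move=> hf hg; case: (hf) => mf hf2; case: (hg) => mg hg2; split.
  exact: measurable_funD.
apply: (intR_dom _ (fun x => 2 * f x ^+ 2 + 2 * g x ^+ 2)).
- by apply: measurable_funX; apply: measurable_funD.
- by move=> x; rewrite ger0_norm ?sqr_ge0 //; have := sqr_ge0 (f x - g x); nra.
- by apply: intR_add; apply: intR_scale.
Qed.

Lemma sqi_scale (a : R) (f : T -> R) : sqi f -> sqi (fun x => a * f x).
Proof.
case=> mf hf2; split; first by apply: measurable_funM => //; exact: measurable_cst.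
have := intR_scale (a ^+ 2) _ hf2; rewrite /intR => h.
by apply: (eq_integrable measurableT _ _ _ h) => x _ /=; rewrite exprMn.
Qed.

Lemma sqi_cst (c : R) : sqi (fun _ => c).
Proof. by split; [exact: measurable_cst | exact: intR_cst]. Qed.

Lemma sqi_sub (f g : T -> R) : sqi f -> sqi g -> sqi (fun x => f x - g x).
Proof.
move=> hf hg; apply: (sqi_add _ _ hf).
have := sqi_scale (-1) _ hg; case=> m1 i1; split.
  by apply: eq_measurable_fun m1 => x _; rewrite mulN1r.
by apply: (eq_integrable measurableT _ _ _ i1) => x _; rewrite mulN1r.
Qed.


Lemma intR_sum (I : finType) (F : I -> T -> R) :
  (forall i, intR (F i)) -> intR (fun x => \sum_i F i x).
Proof.
move=> hF.
have := @integrable_sum _ _ _ P setT measurableT I (index_enum I) xpredT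
  (fun i x => (F i x)%:E) (fun i _ => hF i).
move=> h; apply: (eq_integrable measurableT _ _ _ h) => x _ /=.
by rewrite sumEFin.
Qed.

Lemma Rint_qform n (Q : 'M[R]_n) (X : T -> 'cV[R]_n) :
  (forall i, sqi (fun x => X x i 0)) ->
  \int[P]_x qform Q (X x) = \sum_i \sum_j Q i j * \int[P]_x (X x i 0 * X x j 0).
Proof.
move=> hX.
have hij : forall i j, intR (fun x => X x i 0 * X x j 0) by move=> i j; apply: sqi_mul.
under eq_Rintegral do rewrite qform_sum.
rewrite Rint_sum; last first.
  move=> i; apply: intR_sum => j.
  have := intR_scale (Q i j) _ (hij i j); rewrite /intR => h.
  by apply: (eq_integrable measurableT _ _ _ h) => x _ /=; rewrite mulrCA mulrA.
apply: eq_bigr => i _; rewrite Rint_sum; last first.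
  move=> j; have := intR_scale (Q i j) _ (hij i j); rewrite /intR => h.
  by apply: (eq_integrable measurableT _ _ _ h) => x _ /=; rewrite mulrCA mulrA.
apply: eq_bigr => j _; rewrite -RintegralZl //; last exact: hij.
by apply: eq_Rintegral => x _; rewrite mulrCA mulrA.
Qed.


Lemma Rint_cst (c : R) : \int[P]_x c = c.
Proof. rewrite Rintegral_cst //. have -> : fine (P [set: T]) = 1 by have := probability_setT P; move=> ->. by rewrite mulr1. Qed.

Lemma Rint_center (w : T -> R) : intR w ->
  \int[P]_x (w x - \int[P]_y w y) = 0.
Proof. by move=> hw; rewrite RintegralB //; [rewrite Rint_cst subrr | exact: intR_cst]. Qed.

Lemma Rint_cross (wi wj : T -> R) (ci cj : R) : sqi wi -> sqi wj ->
  \int[P]_x ((ci - wi x) * (cj - wj x)) =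
  \int[P]_x ((wi x - \int[P]_y wi y) * (wj x - \int[P]_y wj y)) +
  (ci - \int[P]_y wi y) * (cj - \int[P]_y wj y).
Proof.
move=> hi hj; set mi := \int[P]_y wi y; set mj := \int[P]_y wj y.
have si : sqi (fun x => wi x - mi) by apply: sqi_sub => //; exact: sqi_cst.
have sj : sqi (fun x => wj x - mj) by apply: sqi_sub => //; exact: sqi_cst.
have ii := sqi_int _ si; have ij := sqi_int _ sj.
have iij := sqi_mul _ _ si sj.
rewrite (@eq_Rintegral _ _ _ P setT (fun x => (wi x - mi) * (wj x - mj) +
   ((- (cj - mj)) * (wi x - mi) + ((- (ci - mi)) * (wj x - mj) + (ci - mi) * (cj - mj))))); last first.
  by move=> x _; ring.
rewrite RintegralD //; last first.
  apply: intR_add; first exact: intR_scale.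
  by apply: intR_add; [exact: intR_scale | exact: intR_cst].
rewrite RintegralD //; last first.
  by apply: intR_add; [exact: intR_scale | exact: intR_cst].
  exact: intR_scale.
rewrite RintegralD //; [|exact: intR_scale|exact: intR_cst].
rewrite !RintegralZl //; last exact: intR_cst.
rewrite Rintegral_cst //.
have -> : fine (P [set: T]) = 1 by have := probability_setT P; move=> ->.
rewrite /mi /mj !Rint_center; first by rewrite !mulr0 !add0r mulr1.
  exact: sqi_int.
exact: sqi_int.
Qed.


Lemma intR_qform n (Q : 'M[R]_n) (X : T -> 'cV[R]_n) :
  (forall i, sqi (fun x => X x i 0)) -> intR (fun x => qform Q (X x)).
Proof.
move=> hX; have := intR_sum _ (fun i x => \sum_j Q i j * (X x i 0 * X x j 0)).
move=> h; have : intR (fun x => \sum_i \sum_j Q i j * (X x i 0 * X x j 0)).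
  apply: h => i; apply: intR_sum => j; apply: intR_scale; exact: sqi_mul.
rewrite /intR => h2; apply: (eq_integrable measurableT _ _ _ h2) => x _ /=.
rewrite qform_sum; congr (_ %:E); apply: eq_bigr => i _; apply: eq_bigr => j _.
by rewrite mulrCA mulrA.
Qed.

End Prob.

Theorem mainTheorem2 (R : realType) (d : measure_display) (T : measurableType d)
  (P : probability T R) (S Theta : Type) (n k m : nat)
  (s : T -> S) (theta : T -> Theta)
  (ubar : S -> Theta -> 'cV[R]_n) (wbar : S -> 'cV[R]_n) (Om : 'M[R]_n) :
  (k < n)%N ->
  posdef Om ->
  sq_integrable P (fun x => ubar (s x) (theta x)) ->
  sq_integrable P (fun x => wbar (s x)) ->
  mx_succ (Varmx P (fun x => wbar (s x)))
          (Emx P (fun x => (ubar (s x) (theta x) - wbar (s x)) *m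
                            (ubar (s x) (theta x) - wbar (s x))^T)) ->
  forall (E : 'M[R]_(k, n)) (A : 'M[R]_(m, n)) (a : 'cV[R]_m) (e : S -> 'cV[R]_k),
    fully_explainable E A a ->
    mvec (fun x => e (s x)) ->
    forall f : T -> 'cV[R]_n,
      (forall x, agent_best Om A a E (e (s x)) (ubar (s x) (theta x)) (f x)) ->
      exists (E' : 'M[R]_(k, n)) (e' : S -> 'cV[R]_k),
        mvec (fun x => e' (s x)) /\
        (exists f' : T -> 'cV[R]_n,
            forall x, agent_best_free Om E' (e' (s x)) (ubar (s x) (theta x)) (f' x)) /\
        (forall f' : T -> 'cV[R]_n,
            (forall x, agent_best_free Om E' (e' (s x)) (ubar (s x) (theta x)) (f' x)) ->
            (welfare P Om f (fun x => wbar (s x)) < welfare P Om f' (fun x => wbar (s x)))%E).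
Proof.
move=> kn hOm hU hW hsucc E A a e hfe he f hf.
have hOs : Om^T = Om by case: hOm.
case: hfe => [[v0 hv0] [hrank _]].
have [B [hAB [hBi hker]]] := ker_basis R n k m A (ltnW kn) hrank.
set Ep' := Ep R n k Om B; set Pm' := Pm R n k Om B; set Q := Qm R n k Om B.
set U := fun x => ubar (s x) (theta x); set W := fun x => wbar (s x).
exists Ep', (fun σ => Ep' *m wbar σ); split.
  move=> i /=.
  have -> : (fun x => (Ep' *m wbar (s x)) i 0) = (fun x => \sum_j Ep' i j * wbar (s x) j 0).
    by apply/funext => x; rewrite mxE.
  apply: measurable_sum => j; apply: measurable_funM; [exact: measurable_cst | exact: (hW j).1].
split.
  exists (fun x => W x + Pm' *m (U x - W x)) => x; exact: best_exists.
move=> f' hf'.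
have hsU : forall i, sqi P (fun x => U x i 0) by move=> i; exact: hU i.
have hsW : forall i, sqi P (fun x => W x i 0) by move=> i; exact: hW i.
have hr : forall i, sqi P (fun x => (U x - W x) i 0).
  move=> i; have -> : (fun x => (U x - W x) i 0) = (fun x => U x i 0 - W x i 0).
    by apply/funext => x; rewrite !mxE.
  exact: sqi_sub.
have hc : forall i, sqi P (fun x => (v0 - W x) i 0).
  move=> i; have -> : (fun x => (v0 - W x) i 0) = (fun x => v0 i 0 - W x i 0).
    by apply/funext => x; rewrite !mxE.
  apply: sqi_sub => //; exact: sqi_cst.
have e1 : forall x, quadpay Om (f' x) (W x) = - qform Q (U x - W x).
  move=> x; rewrite (best_unique R n k Om B hOm hBi _ _ _ (hf' x)) /quadpay -qformPQ.
  by rewrite addrAC subrr add0r.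
have e2 : forall x, qform Q (v0 - W x) <= qform Om (f x - W x).
  move=> x; rewrite -qformPQ mulmxBr.
  have [hAf _] := hf x.
  rewrite -(Pm_aff R n k m Om B hOm hBi A a v0 (f x) hker hv0 hAf) -mulmxBr.
  exact: qformP_le.
have hQpsd := Qm_psd R n k Om B hOm.
have fin : forall g : T -> R, intR P g ->
    (\int[P]_x (g x)%:E = (\int[P]_x g x)%:E)%E.
  by move=> g hg; rewrite /Rintegral fineK // (integrable_fin_num measurableT hg).
rewrite /welfare.
have w1 : (\int[P]_x (quadpay Om (f x) (W x))%:E = - \int[P]_x (qform Om (f x - W x))%:E)%E.
  rewrite -integral_ge0N; last by move=> x _; rewrite lee_fin; exact: psd_of_posdef.
  by apply: eq_integral => x _; rewrite /quadpay EFinN.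
have w2 : (\int[P]_x (quadpay Om (f' x) (W x))%:E = - (\int[P]_x qform Q (U x - W x))%:E)%E.
  under eq_integral do rewrite e1 EFinN.
  rewrite integral_ge0N; last by move=> x _; rewrite lee_fin.
  by rewrite fin //; apply: intR_qform.
have w3 : (\int[P]_x (qform Q (v0 - W x))%:E <= \int[P]_x (qform Om (f x - W x))%:E)%E.
  by apply: ge0_le_integral_nm => x; rewrite lee_fin.
have key : \int[P]_x qform Q (U x - W x) < \int[P]_x qform Q (v0 - W x).
  rewrite !Rint_qform //.
  set mu := Emx P W.
  have hM : forall i j, Emx P (fun x => (U x - W x) *m (U x - W x)^T) i j =
      \int[P]_x ((U x - W x) i 0 * (U x - W x) j 0).
    by move=> i j; rewrite mxE; apply: eq_Rintegral => x _; rewrite !mxE big_ord1 !mxE.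
  have hV : forall i j, Varmx P W i j + (v0 i 0 - mu i 0) * (v0 j 0 - mu j 0) =
      \int[P]_x ((v0 - W x) i 0 * (v0 - W x) j 0).
    move=> i j.
    rewrite (@eq_Rintegral _ _ _ P setT (fun x => (v0 i 0 - W x i 0) * (v0 j 0 - W x j 0)));
      last by move=> x _; rewrite !mxE.
    have hmu : forall l, mu l 0 = \int[P]_x W x l 0 by move=> l; rewrite /mu /Emx mxE.
    rewrite Rint_cross // !hmu; congr (_ + _).
    rewrite /Varmx /Emx mxE; apply: eq_Rintegral => x _.
    by rewrite !mxE big_ord1 !mxE.
  rewrite -subr_gt0.
  have -> : \sum_i \sum_j Q i j * \int[P]_x ((v0 - W x) i 0 * (v0 - W x) j 0) -
      \sum_i \sum_j Q i j * \int[P]_x ((U x - W x) i 0 * (U x - W x) j 0) =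
      tr2 R Q (Varmx P W - Emx P (fun x => (U x - W x) *m (U x - W x)^T)) +
      qform Q (v0 - mu).
    rewrite /tr2 qform_sum -big_split -sumrB; apply: eq_bigr => i _ /=.
    rewrite -big_split -sumrB; apply: eq_bigr => j _ /=.
    set V := Varmx P W; set M := Emx P (fun x => (U x - W x) *m (U x - W x)^T) in hM *.
    rewrite [(V - M) i j]mxE [(- M) i j]mxE hM -hV.
    rewrite [(v0 - mu) i 0]mxE [(v0 - mu) j 0]mxE [(- mu) i 0]mxE [(- mu) j 0]mxE.
    ring.
  apply: (lt_le_trans (tr2_gt0 R n Q _ hsucc (Qm_sym R n k Om B hOm) hQpsd
             (Qm_pos R n k Om B hOm kn))).
  by rewrite lerDl.
rewrite w1 w2; apply: (le_lt_trans (y := - (\int[P]_x qform Q (v0 - W x))%:E)%E).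
  by rewrite leeN2 -fin //; apply: intR_qform.
by rewrite -!EFinN lte_fin ltrN2.
Qed.
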